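(* Let $C\subseteq[n]$ (viewed as a single column of boxes, one box in row $i$ for each $i\in C$) and let $r_C$ be the rank function of the Schubert matroid $SM_n(C)$. Then for every subset $S\subseteq[n]$, \[r_C(S)=\max\{|\mathcal{F}|\colon \mathcal{F}\in\mathcal{F}(C,S)\}.\]
   Context: For $T=\{a_1<\cdots<a_k\}$ and $S=\{b_1<\cdots<b_k\}$ subsets of $[n]$, $T\le S$ means $\#T=\#S$ and $a_i\le b_i$ for all $i$. $SM_n(C)$ is the matroid on $[n]$ with bases $\{T\subseteq[n]\colon T\le C\}$, and $r_C(A)=\max\{\#(A\cap B)\colon B\text{ a basis}\}$. A filling of $C$ is an assignment of positive integers to some (possibly none) of the boxes of $C$; unassigned boxes are empty, and $|\mathcal{F}|$ is the number of nonempty boxes. A filling is column-strict if the integers appearing are distinct, and flagged if each integer placed in the box of row $i$ is at most $i$. $\mathcal{F}(C,S)$ is the set of column-strict flagged fillings of $C$ all of whose entries lie in $S$. *)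

(* Defs.v *)
(* [n] = {1,...,n} is modelled by 'I_n = {0,...,n-1};
   the element i : 'I_n stands for i+1 in [n]. *)
From mathcomp Require Import all_boot all_order.
Set Implicit Arguments. Unset Strict Implicit. Unset Printing Implicit Defensive.

Definition sorted_elems (n : nat) (T : {set 'I_n}) : seq nat :=
  sort leq [seq (val x).+1 | x <- enum T].

Definition gale_le (n : nat) (T S : {set 'I_n}) : bool :=
  (#|T| == #|S|) && all2 leq (sorted_elems T) (sorted_elems S).

Definition schubert_bases (n : nat) (C : {set 'I_n}) : {set {set 'I_n}} :=
  [set T : {set 'I_n} | gale_le T C].

Definition rankC (n : nat) (C A : {set 'I_n}) : nat :=
  \max_(B in schubert_bases C) #|A :&: B|.

(* A filling of the column C: box of row i (i : 'I_n, i.e. row i+1) holds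
   Some k (positive integer k) or None (empty); boxes exist only in rows of C. *)
Definition is_filling (n : nat) (C : {set 'I_n}) (F : 'I_n -> option nat) : Prop :=
  (forall i, i \notin C -> F i = None) /\ (forall i k, F i = Some k -> 0 < k).

Definition filling_size (n : nat) (F : 'I_n -> option nat) : nat :=
  #|[set i : 'I_n | F i != None]|.

Definition column_strict (n : nat) (F : 'I_n -> option nat) : Prop :=
  forall i j k, F i = Some k -> F j = Some k -> i = j.

Definition flagged (n : nat) (F : 'I_n -> option nat) : Prop :=
  forall i k, F i = Some k -> k <= (val i).+1.

Definition entries_in (n : nat) (S : {set 'I_n}) (F : 'I_n -> option nat) : Prop :=
  forall i k, F i = Some k -> exists2 s : 'I_n, s \in S & k = (val s).+1.

Definition in_FCS (n : nat) (C S : {set 'I_n}) (F : 'I_n -> option nat) : Prop :=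
  [/\ is_filling C F, column_strict F, flagged F & entries_in S F].

(* Main.v *)
Require Import Defs.
From mathcomp Require Import all_boot all_order.
From mathcomp Require Import zify.
Set Implicit Arguments. Unset Strict Implicit. Unset Printing Implicit Defensive.

Definition Lset n t : {set 'I_n} := [set x : 'I_n | val x < t].
Definition cnt n (T : {set 'I_n}) t := #|T :&: Lset n t|.

Lemma enum_sorted n (T : {set 'I_n}) : sorted ltn [seq (val x).+1 | x <- enum T].
Proof.
have h1 : subseq (enum T) (enum 'I_n).
  by rewrite [enum 'I_n]enumT /enum_mem filter_subseq.
have h2 : sorted ltn [seq val x | x <- enum T].
  apply: (subseq_sorted ltn_trans (map_subseq _ h1)).
  by rewrite val_enum_ord iota_ltn_sorted.
rewrite (map_comp succn val).
by apply: (homo_sorted _ _ h2) => x y.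
Qed.

Lemma sorted_elemsE n (T : {set 'I_n}) :
  sorted_elems T = [seq (val x).+1 | x <- enum T].
Proof.
rewrite /sorted_elems sorted_sort //; first exact: leq_trans.
by have := enum_sorted T; rewrite ltn_sorted_uniq_leq => /andP[].
Qed.

Lemma size_se n (T : {set 'I_n}) : size (sorted_elems T) = #|T|.
Proof. by rewrite sorted_elemsE size_map cardE. Qed.

Lemma count_cnt n (T : {set 'I_n}) t :
  count (fun x => x < t.+1) (sorted_elems T) = cnt T t.
Proof.
rewrite sorted_elemsE count_map /cnt cardE (perm_size (enum_setI _ _)) size_filter.
by apply: eq_count => x; rewrite /= inE ltnS.
Qed.

Lemma keyL (s : seq nat) : sorted ltn s -> forall i t, i < size s ->
  (nth 0 s i < t) = (i < count (fun x => x < t) s).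
Proof.
elim: s => [|a s IH] //= hs i t hi.
have hs' : sorted ltn s := path_sorted hs.
have hall : all (fun y => a < y) s.
  by have := hs; rewrite (path_sortedE ltn_trans) => /andP[].
case: i hi => [|i] hi /=.
  case: (ltnP a t) => hat //=.
  have -> : count (fun x => x < t) s = 0.
    apply/eqP; rewrite -leqn0 leqNgt -has_count.
    apply/negP => /hasP [y ys yt]. move/allP: hall => /(_ y ys). lia.
  by [].
rewrite IH //.
case: (ltnP a t) => hat /=; first by rewrite add1n ltnS.
have -> : count (fun x => x < t) s = 0.
  apply/eqP; rewrite -leqn0 leqNgt -has_count.
  apply/negP => /hasP [y ys yt]. move/allP: hall => /(_ y ys). lia.
by [].
Qed.

Lemma all2_nth1 (s t : seq nat) i : all2 leq s t -> i < size s -> nth 0 s i <= nth 0 t i.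
Proof.
elim: s t i => [|a s IH] [|b t] [|i] //= /andP[h1 h2] hi //.
exact: IH.
Qed.

Lemma all2_nth2 (s t : seq nat) : size s = size t ->
  (forall i, i < size s -> nth 0 s i <= nth 0 t i) -> all2 leq s t.
Proof.
elim: s t => [|a s IH] [|b t] //= [] hsz h.
rewrite (h 0 erefl) /=; apply: IH => // i hi; exact: (h i.+1).
Qed.

Lemma CC_gale n (T C : {set 'I_n}) : #|T| = #|C| ->
  (forall t, cnt C t <= cnt T t) -> gale_le T C.
Proof.
move=> hsz hc; rewrite /gale_le hsz eqxx /=.
apply: all2_nth2; first by rewrite !size_se.
move=> i hi.
set c := nth 0 (sorted_elems C) i.
have sC := enum_sorted C; rewrite -sorted_elemsE in sC.
have sT := enum_sorted T; rewrite -sorted_elemsE in sT.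
have hiC : i < size (sorted_elems C) by rewrite size_se -hsz -size_se.
have : nth 0 (sorted_elems C) i < c.+1 by [].
rewrite (keyL sC) // count_cnt => h1.
have : i < count (fun x => x < c.+1) (sorted_elems T).
  rewrite count_cnt; exact: leq_trans h1 (hc c).
by rewrite -(keyL sT) // ltnS.
Qed.

Lemma cnt0 n (X : {set 'I_n}) : cnt X 0 = 0.
Proof.
rewrite /cnt; apply/eqP; rewrite cards_eq0; apply/eqP; apply/setP => x; by rewrite !inE andbF.
Qed.

Lemma cnt_big n (X : {set 'I_n}) t : n <= t -> cnt X t = #|X|.
Proof.
move=> h; rewrite /cnt; suff -> : X :&: Lset n t = X by []; apply/setP => x; rewrite !inE.
by rewrite (leq_trans (ltn_ord x) h) andbT.
Qed.

Lemma cnt_step n (X : {set 'I_n}) t (h : t < n) :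
  cnt X t.+1 = cnt X t + (Ordinal h \in X).
Proof.
rewrite /cnt.
case hX: (Ordinal h \in X).
  have -> : X :&: Lset n t.+1 = Ordinal h |: (X :&: Lset n t).
    apply/setP => x; rewrite !inE ltnS leq_eqVlt.
    case: (eqVneq x (Ordinal h)) => [->|hx] /=; first by rewrite eqxx hX.
    have : val x != t by apply: contra hx => /eqP e; apply/eqP/val_inj.
    by move/negbTE => ->.
  rewrite cardsU1 !inE /= ltnn andbF /=; lia.
have -> : X :&: Lset n t.+1 = X :&: Lset n t.
  apply/setP => x; rewrite !inE ltnS leq_eqVlt.
  case: (eqVneq x (Ordinal h)) => [->|hx] /=; first by rewrite hX.
  have : val x != t by apply: contra hx => /eqP e; apply/eqP/val_inj.
  by move/negbTE => ->.
by rewrite addn0.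
Qed.

Lemma cnt_min n (W : {set 'I_n}) k t :
  cnt [set x in W | cnt W (val x) < k] t = minn k (cnt W t).
Proof.
elim: t => [|t IH]; first by rewrite !cnt0 minn0.
case: (ltnP t n) => h.
  rewrite !(cnt_step _ h) IH inE /=.
  case: (Ordinal h \in W) => /=; lia.
by rewrite !cnt_big // ?(leq_trans h) // -(cnt_big _ h) -(cnt_big W h) -IH cnt_big.
Qed.

Lemma part2 n (C S : {set 'I_n}) F : in_FCS C S F -> filling_size F <= rankC C S.
Proof.
case=> [[hC hpos] hstr hfl hin].
set A := [set i | F i != None].
have AC : A \subset C.
  apply/subsetP => i; rewrite inE; apply: contraR => /hC ->; by [].
pose h i := insubd i ((odflt 0 (F i)).-1).
have hA : forall i, i \in A -> [/\ F i = Some (val (h i)).+1, h i \in S & val (h i) <= val i].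
  move=> i; rewrite inE; case e: (F i) => [k|] // _.
  have [s sS ek] := hin i k e.
  have hs : h i = s.
    by apply: val_inj; rewrite /h e /= val_insubd ek /= ltn_ord.
  rewrite hs -ek; split => //. by have := hfl _ _ e; rewrite ek ltnS.
have hinj : {in A &, injective h}.
  move=> i j /hA [ei _ _] /hA [ej _ _] e. apply: (hstr i j (val (h i)).+1 ei). by rewrite ej -e.
set D := h @: A.
have cD : #|D| = #|A| := card_in_imset hinj.
have DS : D \subset S.
  apply/subsetP => x /imsetP [i iA ->]; by case: (hA i iA).
have cntDA : forall t, cnt A t <= cnt D t.
  move=> t. rewrite /cnt -(card_in_imset (f:=h) (D := A :&: Lset n t)).
    apply: subset_leq_card; apply/subsetP => x /imsetP [i]; rewrite inE => /andP [iA iL] ->.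
    rewrite inE; apply/andP; split; first by apply: imset_f.
    rewrite inE in iL *. have [_ _ le] := hA i iA. rewrite inE; exact: (leq_ltn_trans le iL).
  move=> i j; rewrite inE => /andP [iA _]; rewrite inE => /andP [jA _]; exact: hinj.
set k := #|C| - #|A|.
set W := ~: D.
set Y := [set x in W | cnt W (val x) < k].
set B := D :|: Y.
have cB : forall t, cnt B t = cnt D t + minn k (cnt W t).
  move=> t; rewrite -cnt_min /cnt /B setIUl cardsU.
  have -> : (D :&: Lset n t) :&: (Y :&: Lset n t) = set0.
    apply/setP => x; rewrite !inE. by case: (x \in D); rewrite ?andbF.
  by rewrite cards0 subn0.
have cW : forall t, cnt D t + cnt W t = #|Lset n t|.
  move=> t; rewrite /cnt /W -(cardsID D (Lset n t)) setDE setIC (setIC _ (~: D)).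
  by [].
have CT : forall t, cnt C t <= #|Lset n t|.
  move=> t; apply: subset_leq_card; exact: subsetIr.
have AC' : forall t, cnt C t + #|A| <= #|C| + cnt A t.
  move=> t; rewrite /cnt -(cardsID (Lset n t) C) -(cardsID (Lset n t) A).
  have : #|A :\: Lset n t| <= #|C :\: Lset n t|.
    by apply: subset_leq_card; apply: setSD.
  move=> le; rewrite -addnA leq_add2l addnC leq_add2r; exact: le.
have cA : #|A| <= #|C| by apply: subset_leq_card.
have Cn : #|C| <= n by have := max_card C; rewrite card_ord.
have cBn : #|B| = #|C|.
  have := cB n; rewrite !cnt_big // /W.
  have := cardsC D; rewrite card_ord cD => h1 ->.
  have hk : k <= #|~: D|.
    apply: (@leq_trans (n - #|A|)); first by rewrite /k; lia.
    have e : n - #|A| = #|~: D|.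
      apply/eqP; rewrite -(eqn_add2l #|A|) subnKC ?h1 //; lia.
    by rewrite e.
  rewrite (minn_idPl hk) /k; lia.
have gale : gale_le B C.
  apply: CC_gale => // t. rewrite cB.
  have := cW t; have := CT t; have := AC' t; have := cntDA t; lia.
have SB : #|D| <= #|S :&: B|.
  apply: subset_leq_card; apply/subsetP => x xD; rewrite !inE xD andbT.
  exact: (subsetP DS).
rewrite /filling_size -/A -cD. apply: leq_trans SB _.
apply: (leq_bigmax_cond (F := fun B => #|S :&: B|)). by rewrite inE.
Qed.

Lemma part1 n (C S B : {set 'I_n}) : gale_le B C ->
  exists F, in_FCS C S F /\ #|S :&: B| <= filling_size F.
Proof.
case/andP => /eqP hsz hall; rewrite !sorted_elemsE in hall.
pose g c := nth c (enum B) (index c (enum C)).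
have hi : forall c, c \in C -> index c (enum C) < size (enum B).
  by move=> c cC; rewrite -cardE hsz cardE index_mem mem_enum.
have gB : forall c, c \in C -> g c \in B.
  by move=> c cC; rewrite -mem_enum mem_nth // hi.
have gle : forall c, c \in C -> val (g c) <= val c.
  move=> c cC; have h := all2_nth1 hall.
  have hC : index c (enum C) < size (enum C) by rewrite index_mem mem_enum.
  have := h (index c (enum C)); rewrite size_map => /(_ (hi c cC)).
  rewrite (nth_map c) ?hi // (nth_map c) // nth_index ?mem_enum //.
have ginj : {in C &, injective g}.
  move=> c c' cC c'C; rewrite /g (set_nth_default c c') ?hi // => /eqP.
  rewrite nth_uniq ?hi ?enum_uniq // => /eqP e.
  have hc : c \in enum C by rewrite mem_enum.
  have hc' : c' \in enum C by rewrite mem_enum.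
  by rewrite -(nth_index c hc) e nth_index.
pose F c := if (c \in C) && (g c \in S) then Some (val (g c)).+1 else None.
exists F; split.
  split.
  - split; first by move=> i; rewrite /F => /negbTE ->.
    by move=> i k; rewrite /F; case: ifP => // _ [<-].
  - move=> i j k; rewrite /F; case: ifP => // /andP [iC _] [<-].
    case: ifP => // /andP [jC _] [] /val_inj e.
    exact: (ginj _ _ iC jC (esym e)).
  - move=> i k; rewrite /F; case: ifP => // /andP [iC _] [<-]; rewrite ltnS; exact: gle.
  - move=> i k; rewrite /F; case: ifP => // /andP [iC iS] [<-]; by exists (g i).
set X := [set c | g c \in S].
rewrite /filling_size.
have -> : [set i | F i != None] = C :&: X.
  by apply/setP => c; rewrite !inE /F; case: ifP.
have h1 := cardsID X C.
have h2 := cardsID S B.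
have h3 : #|C :\: X| <= #|B :\: S|.
  rewrite -(card_in_imset (f := g) (D := C :\: X)).
    apply: subset_leq_card; apply/subsetP => x /imsetP [c]; rewrite !inE => /andP [cX cC] ->.
    by rewrite gB // andbT.
  move=> c c'; rewrite !inE => /andP [_ cC] /andP [_ c'C]; exact: ginj.
rewrite [S :&: B]setIC.
move: h1 h2 h3; rewrite hsz => e1 e2 le.
by rewrite -(leq_add2r #|C :\: X|) e1 -e2 leq_add2l.
Qed.

Theorem theorem3p4 (n : nat) (C S : {set 'I_n}) :
  (exists F : 'I_n -> option nat, in_FCS C S F /\ filling_size F = rankC C S) /\
  (forall F : 'I_n -> option nat, in_FCS C S F -> filling_size F <= rankC C S).
Proof.
split; last by move=> F; exact: part2.
have CC : C \in schubert_bases C.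
  rewrite inE /gale_le eqxx /=; apply: all2_nth2 => // i _; exact: leqnn.
have hpos : 0 < #|schubert_bases C| by apply/card_gt0P; exists C.
have [B0 B0in e] := eq_bigmax_cond (fun B => #|S :&: B|) hpos.
have gB : gale_le B0 C by move: B0in; rewrite inE.
have [F [hF hle]] := part1 S gB.
exists F; split => //.
apply/eqP; rewrite eqn_leq part2 //= /rankC e; exact: hle.
Qed.
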